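(* Let $n\in\mathbb N$, let $a_1,\dots,a_4,b_1,\dots,b_4$ be nonnegative integers with $a_1+\dots+a_4=b_1+\dots+b_4$, and let $\sigma_1,\dots,\sigma_4$ be the four distinct cyclic permutations of $(1,2,3,4)$. Identify $$\mathbb C^{(a_1+\cdots+a_4)n}\otimes\mathbb C^{(b_1+\cdots+b_4)n}\equiv\Big(\bigoplus_{j,k=1}^4\mathbb C^{a_j}\otimes\mathbb C^{b_k}\Big)\otimes(\mathbb C^n\otimes\mathbb C^n).$$ Then the largest eigenvalue of $$\frac{n}{2n-1}\sum_{i=1}^4\Big(\bigoplus_{j=1}^4 I_{a_j}\otimes\mathfrak P^{(n)}_{\sigma_j(i)}\Big)\otimes\Big(\bigoplus_{j=1}^4 I_{b_j}\otimes\mathfrak P^{(n)}_{\sigma_j(i)}\Big)$$ is $1$, with eigenspace $$\Big\{\big(|\mathrm{aux}_1\rangle\oplus|\mathrm{aux}_2\rangle\oplus|\mathrm{aux}_3\rangle\oplus|\mathrm{aux}_4\rangle\big)\otimes|\phi_n\rangle:\ |\mathrm{aux}_j\rangle\in\mathbb C^{a_j}\otimes\mathbb C^{b_j}\Big\}.$$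
   Context: $|\phi_n\rangle=\frac1{\sqrt n}\sum_{i=1}^n|i\rangle|i\rangle\in\mathbb C^n\otimes\mathbb C^n$. For $n\in\mathbb N$, $\mathfrak P^{(n)}_1,\dots,\mathfrak P^{(n)}_4\in M_n(\mathbb R)$ denote orthogonal projections (real symmetric idempotent matrices) such that (i) $\mathfrak P^{(n)}_1+\dots+\mathfrak P^{(n)}_4=(2-\frac1n)I_n$; (ii) $\operatorname{rk}\mathfrak P^{(n)}_1=\lfloor\frac n2\rfloor-(-1)^n$ and $\operatorname{rk}\mathfrak P^{(n)}_i=\lfloor\frac n2\rfloor$ for $i=2,3,4$; (iii) the only subspaces of $\mathbb C^n$ invariant under all four matrices are $0$ and $\mathbb C^n$. Such quadruples exist for every $n$, and any two of them are simultaneously unitarily equivalent; moreover, any quadruple of orthogonal projections on a Hilbert space summing to $(2-\frac1n)I$ with no nontrivial common invariant closed subspace is unitarily equivalent to one of the four cyclic shifts $(\mathfrak P^{(n)}_{\sigma(1)},\dots,\mathfrak P^{(n)}_{\sigma(4)})$, $\sigma$ a power of the cycle $(1\,2\,3\,4)$, and these four are pairwise inequivalent. *)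

(* Defs.v *)
From HB Require Import structures.
From mathcomp Require Import all_boot all_order all_algebra.
Set Implicit Arguments. Unset Strict Implicit. Unset Printing Implicit Defensive.
Import Order.TTheory GRing.Theory Num.Theory.
Local Open Scope ring_scope.

(* Index set of  (+)_{j=1}^4 C^{a_j} (x) C^n  ==  C^{(a_1+..+a_4) n}:
   triples (j, x, p) with j : 'I_4, x : 'I_(a j), p : 'I_n.                  *)
Notation blk a n := {j : 'I_4 & ('I_(a j) * 'I_n)%type}.

(* Entry (u,v) of  (+)_{j} I_{a_j} (x) P_{sigma_j(i)},
   where sigma_j(i) = i + s j  (mod 4) is the j-th cyclic permutation. *)
Definition blkP (C : numClosedFieldType) (n : nat) (P : 'I_4 -> 'M[C]_n)
    (s : 'I_4 -> 'I_4) (a : 'I_4 -> nat) (i : 'I_4) (u v : blk a n) : C :=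
  ((tag u == tag v) && ((tagged u).1 == (tagged v).1 :> nat))%:R *
  P (i + s (tag u)) (tagged u).2 (tagged v).2.

(* Entry (u,v) of  n/(2n-1) \sum_i (.. a ..) (x) (.. b ..)  on the index set
   blk a n * blk b n  (a basis of C^{(sum a) n} (x) C^{(sum b) n}). *)
Definition opE (C : numClosedFieldType) (n : nat) (P : 'I_4 -> 'M[C]_n)
    (s : 'I_4 -> 'I_4) (a b : 'I_4 -> nat) (u v : blk a n * blk b n) : C :=
  (n%:R / (2 * n%:R - 1)) *
  \sum_(i < 4) blkP P s i u.1 v.1 * blkP P s i u.2 v.2.

Definition opmx (C : numClosedFieldType) (n : nat) (P : 'I_4 -> 'M[C]_n)
    (s : 'I_4 -> 'I_4) (a b : 'I_4 -> nat) :
    'M[C]_#|{: blk a n * blk b n}| :=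
  \matrix_(r, c) opE P s (enum_val r) (enum_val c).

(* Coordinates of  (aux_1 (+) .. (+) aux_4) (x) |phi_n>,
   |phi_n> = n^{-1/2} \sum_p |p>|p>, aux_j in C^{a_j} (x) C^{b_j}. *)
Definition auxphi (C : numClosedFieldType) (n : nat) (a b : 'I_4 -> nat)
    (aux : forall j : 'I_4, 'M[C]_(a j, b j)) (w : blk a n * blk b n) : C :=
  \sum_(j < 4) \sum_(x < a j) \sum_(y < b j) \sum_(p < n)
     (aux j x y / sqrtC n%:R) *
     (w == (Tagged (fun k => ('I_(a k) * 'I_n)%type) (x, p),
            Tagged (fun k => ('I_(b k) * 'I_n)%type) (y, p)))%:R.

(* Main.v *)
Require Import Defs.
From HB Require Import structures.
From mathcomp Require Import all_boot all_order all_algebra.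
From mathcomp Require Import ring zify.
Set Implicit Arguments. Unset Strict Implicit. Unset Printing Implicit Defensive.
Import Order.TTheory GRing.Theory Num.Theory Num.Def.
Local Open Scope ring_scope.

Section Core.
Variable C : numClosedFieldType.
Variable n : nat.

Definition adj (X : 'M[C]_n) : 'M[C]_n := (map_mx conjC X)^T.
Definition nrm (X : 'M[C]_n) : C := \tr (adj X *m X).

Lemma adjM (X Y : 'M[C]_n) : adj (X *m Y) = adj Y *m adj X.
Proof. by rewrite /adj map_mxM trmx_mul. Qed.

Lemma adjB (X Y : 'M[C]_n) : adj (X - Y) = adj X - adj Y.
Proof. by rewrite /adj map_mxB linearB. Qed.

Lemma nrmE (X : 'M[C]_n) : nrm X = \sum_i \sum_k `|X k i| ^+ 2.
Proof.
rewrite /nrm /mxtrace; apply: eq_bigr => i _; rewrite mxE.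
by apply: eq_bigr => k _; rewrite !mxE normCK mulrC.
Qed.

Lemma nrm_ge0 (X : 'M[C]_n) : 0 <= nrm X.
Proof. by rewrite nrmE; apply: sumr_ge0 => i _; apply: sumr_ge0 => k _; apply: exprn_ge0. Qed.

Lemma nrm_eq0 (X : 'M[C]_n) : nrm X = 0 -> X = 0.
Proof.
rewrite nrmE => H; apply/matrixP => k i; rewrite mxE.
have H1 : \sum_k `|X k i| ^+ 2 = 0.
  by move: H => /psumr_eq0P H; apply: H => // j _; apply: sumr_ge0 => l _; apply: exprn_ge0.
have H2 : `|X k i| ^+ 2 = 0.
  by move: H1 => /psumr_eq0P H1; apply: H1 => // j _; apply: exprn_ge0.
by move/eqP: H2; rewrite sqrf_eq0 normr_eq0 => /eqP.
Qed.

Lemma nrm0 : nrm 0 = 0.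
Proof. by rewrite /nrm mulmx0 linear0. Qed.

Lemma nrm_gt0 (X : 'M[C]_n) : X != 0 -> 0 < nrm X.
Proof.
move=> nz; rewrite lt_def nrm_ge0 andbT; apply/eqP => /nrm_eq0 h.
by rewrite h eqxx in nz.
Qed.

Lemma core_id (A B : 'I_4 -> 'M[C]_n) (lam mu : C) (X : 'M[C]_n) :
  (forall i, adj (A i) = A i) -> (forall i, adj (B i) = B i) ->
  (forall i, A i *m A i = A i) -> (forall i, B i *m B i = B i) ->
  \sum_i A i = lam%:M -> \sum_i B i = lam%:M ->
  \sum_i A i *m X *m B i = mu *: X ->
  \sum_i nrm (A i *m X - X *m B i) = 2 * (lam - mu) * nrm X.
Proof.
move=> hA hB iA iB sA sB sX.
have step : forall i, nrm (A i *m X - X *m B i) =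
   \tr (adj X *m A i *m X) + \tr (adj X *m X *m B i)
   - 2 * \tr (adj X *m (A i *m X *m B i)).
  move=> i; rewrite /nrm adjB !adjM hA hB.
  rewrite mulmxBl !mulmxBr !linearB /=.
  have e1 : \tr (adj X *m A i *m (A i *m X)) = \tr (adj X *m A i *m X).
    by rewrite -mulmxA (mulmxA (A i)) iA mulmxA.
  have e2 : \tr (adj X *m A i *m (X *m B i)) = \tr (adj X *m (A i *m X *m B i)).
    by rewrite !mulmxA.
  have e3 : \tr (B i *m adj X *m (A i *m X)) = \tr (adj X *m (A i *m X *m B i)).
    by rewrite -!mulmxA mxtrace_mulC !mulmxA.
  have e4 : \tr (B i *m adj X *m (X *m B i)) = \tr (adj X *m X *m B i).
    by rewrite -!mulmxA mxtrace_mulC !mulmxA -(mulmxA _ (B i) (B i)) iB.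
  rewrite e1 e2 e3 e4; ring.
have s1 : \sum_i \tr (adj X *m A i *m X) = lam * nrm X.
  by rewrite -linear_sum /= -mulmx_suml -mulmx_sumr sA mul_mx_scalar -scalemxAl mxtraceZ.
have s2 : \sum_i \tr (adj X *m X *m B i) = lam * nrm X.
  by rewrite -linear_sum /= -mulmx_sumr sB mul_mx_scalar mxtraceZ.
have s3 : \sum_i \tr (adj X *m (A i *m X *m B i)) = mu * nrm X.
  by rewrite -linear_sum /= -mulmx_sumr sX -scalemxAr mxtraceZ.
rewrite (eq_bigr _ (fun i _ => step i)) !big_split /= sumrN -mulr_sumr s1 s2 s3; ring.
Qed.


Lemma adj_real (Q : 'M[C]_n) :
  (forall p q, Q p q \is Num.real) -> Q^T = Q -> adj Q = Q.
Proof.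
move=> hr ht; rewrite /adj.
have -> : map_mx conjC Q = Q by apply/matrixP => p q; rewrite mxE conj_Creal.
exact: ht.
Qed.

Lemma commutant (P : 'I_4 -> 'M[C]_n) (Y : 'M[C]_n) : (0 < n)%N ->
  (forall U : 'M[C]_n, (forall i, stablemx U (P i)) -> (U == 0) || row_full U) ->
  (forall m, P m *m Y = Y *m P m) -> exists mu, Y = mu%:M.
Proof.
move=> n0 irr hc.
have [mu hmu] : exists mu, root (char_poly Y) mu.
  by apply/closed_rootP; rewrite size_char_poly; case: n n0.
exists mu.
have ev : eigenvalue Y mu by rewrite eigenvalue_root_char.
have st : forall i, stablemx (eigenspace Y mu) (P i).
  move=> i; rewrite /eigenspace; apply/sub_kermxP.
  by rewrite -mulmxA mulmxBr hc scalar_mxC -mulmxBl mulmxA mulmx_ker mul0mx.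
have := irr _ st; move: ev; rewrite /eigenvalue => /negPf -> /=.
rewrite /row_full /eigenspace mxrank_ker => /eqP h.
have h0 : \rank (Y - mu%:M) = 0%N.
  by move: h (rank_leq_row (Y - mu%:M)); case: (\rank _) => // r; lia.
by apply/eqP; rewrite -subr_eq0 -mxrank_eq0 h0.
Qed.

Lemma offdiag (P : 'I_4 -> 'M[C]_n) (s : 'I_4 -> 'I_4) (j k : 'I_4) (X : 'M[C]_n) :
  (0 < n)%N ->
  (forall U : 'M[C]_n, (forall i, stablemx U (P i)) -> (U == 0) || row_full U) ->
  (forall m, adj (P m) = P m) ->
  \rank (P 0) != n./2 -> (forall i : 'I_4, i != 0 -> \rank (P i) = n./2) ->
  injective s -> j != k ->
  (forall i, P (i + s j) *m X = X *m P (i + s k)) -> X = 0.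
Proof.
move=> n0 irr hadj hr0 hr inj jk hI.
have hc : forall m, P m *m (adj X *m X) = adj X *m X *m P m.
  move=> m; have := hI (m - s k); rewrite subrK => e.
  have e' := congr1 adj e; rewrite !adjM !hadj in e'.
  by rewrite mulmxA -e' -!mulmxA e.
have [nu hnu] := commutant n0 irr hc.
have [nu0|nz] := eqVneq nu 0.
  by apply: nrm_eq0; rewrite /nrm hnu nu0 mxtrace_scalar mul0rn.
have uX : X \in unitmx.
  rewrite unitmxE unitfE; apply/eqP => d0.
  have := congr1 determinant hnu; rewrite det_mulmx d0 mulr0 det_scalar => /esym/eqP.
  by rewrite expf_eq0 (negPf nz) andbF.
exfalso; have := hI (- s j); rewrite addNr => e.
have r1 : \rank (P 0 *m X) = \rank (P 0) by rewrite mxrankMfree // row_free_unit.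
have r2 : \rank (X *m P (- s j + s k)) = \rank (P (- s j + s k)).
  by rewrite (eqmxMfull _ (_ : row_full X)) // row_full_unit.
have nz2 : - s j + s k != 0.
  rewrite addrC subr_eq0; apply: contra jk => /eqP h; rewrite (inj _ _ h) //.
move: hr0; rewrite -r1 e r2 hr // eqxx //.
Qed.

End Core.

Section Blk.
Variable C : numClosedFieldType.
Variable n : nat.
Variable P : 'I_4 -> 'M[C]_n.
Variable s : 'I_4 -> 'I_4.

Definition tg (a : 'I_4 -> nat) (j : 'I_4) (x : 'I_(a j)) (p : 'I_n) : blk a n :=
  Tagged (fun k => ('I_(a k) * 'I_n)%type) (x, p).

Lemma tg_eq (a : 'I_4 -> nat) j (x : 'I_(a j)) p j' (x' : 'I_(a j')) p' :
  (tg x p == tg x' p') = [&& j == j', (x == x' :> nat) & p == p'].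
Proof.
case: (eqVneq j j') => [e|ne] /=.
  subst j'; rewrite /tg eq_Tagged /= xpair_eqE //.
apply/negbTE/eqP => /(congr1 tag) /= e; by rewrite e eqxx in ne.
Qed.

Lemma sum_blk (a : 'I_4 -> nat) i j (x : 'I_(a j)) p (g : blk a n -> C) :
  \sum_u blkP P s i (tg x p) u * g u = \sum_p' P (i + s j) p p' * g (tg x p').
Proof.
rewrite (bigID (fun u => u \in [set tg x p' | p' in [set: 'I_n]])) /=.
rewrite [X in _ + X]big1 ?addr0; last first.
  move=> [j' [x' p']] /= Hn; rewrite /blkP /=.
  case: (eqVneq j j') => [e|ne]; last by rewrite /= !mul0r.
  move: x' p' Hn; rewrite -e => x' p' Hn.
  case: (eqVneq (x : nat) x') => [e2|ne]; last by rewrite /= !mul0r.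
  have ex : x = x' by apply: val_inj.
  subst x'; exfalso; move/negP: Hn; apply; apply/imsetP; exists p'; rewrite ?inE //.
rewrite big_imset /=; last first.
  by move=> p1 p2 _ _ /eqP; rewrite tg_eq !eqxx /= => /eqP.
apply: eq_big => [p'|p' _]; first by rewrite inE.
rewrite /blkP /= !eqxx mul1r //.
Qed.

Variables a b : 'I_4 -> nat.
Definition Xf (f : blk a n * blk b n -> C) j (x : 'I_(a j)) k (y : 'I_(b k)) : 'M[C]_n :=
  \matrix_(p, q) f (tg x p, tg y q).

Lemma op_block (f : blk a n * blk b n -> C) j (x : 'I_(a j)) k (y : 'I_(b k)) (p q : 'I_n) :
  (forall i, (P i)^T = P i) ->
  \sum_u f u * opE P s (tg x p, tg y q) u
  = ((n%:R / (2 * n%:R - 1)) *: \sum_i (P (i + s j) *m Xf f x y *m P (i + s k))) p q.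
Proof.
move=> hsym; set c := (n%:R / (2 * n%:R - 1)).
rewrite /opE /=.
have E : forall i, \sum_u1 blkP P s i (tg x p) u1 * \sum_u2 (blkP P s i (tg y q) u2 * f (u1, u2))
     = \sum_(u : blk a n * blk b n) blkP P s i (tg x p) u.1 * blkP P s i (tg y q) u.2 * f u.
  move=> i.
  rewrite [RHS](eq_bigr (fun u => blkP P s i (tg x p) u.1 * blkP P s i (tg y q) u.2 * f (u.1, u.2))); last by case.
  rewrite -(pair_bigA _ (fun u1 u2 => blkP P s i (tg x p) u1 * blkP P s i (tg y q) u2 * f (u1, u2))) /=.
  apply: eq_bigr => u1 _; rewrite mulr_sumr.
  by apply: eq_bigr => u2 _; rewrite mulrA.
transitivity (c * \sum_i \sum_u1 blkP P s i (tg x p) u1 * \sum_u2 (blkP P s i (tg y q) u2 * f (u1, u2))).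
  rewrite (eq_bigr _ (fun i _ => E i)).
  rewrite exchange_big mulr_sumr; apply: eq_bigr => u _.
  by rewrite mulrCA; congr (_ * _); rewrite mulrC mulr_suml.
have inner : forall i u1, \sum_u2 blkP P s i (tg y q) u2 * f (u1, u2)
    = \sum_q' P (i + s k) q q' * f (u1, tg y q').
  by move=> i u1; apply: (sum_blk i y q (fun u2 => f (u1, u2))).
have outer : forall i, \sum_u1 blkP P s i (tg x p) u1 * \sum_u2 (blkP P s i (tg y q) u2 * f (u1, u2))
   = \sum_p' P (i + s j) p p' * \sum_q' P (i + s k) q q' * f (tg x p', tg y q').
  move=> i; rewrite -(sum_blk i x p (fun u1 => \sum_q' P (i + s k) q q' * f (u1, tg y q'))).
  by apply: eq_bigr => u1 _; rewrite inner.
rewrite (eq_bigr _ (fun i _ => outer i)).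
rewrite mxE summxE; congr (_ * _); apply: eq_bigr => i _.
rewrite !mxE; under [RHS]eq_bigr => q' _ do rewrite !mxE.
have hB : forall q', P (i + s k) q' q = P (i + s k) q q'.
  by move=> q'; rewrite -{1}hsym mxE.
under [RHS]eq_bigr => q' _ do rewrite hB mulr_suml.
rewrite exchange_big /=; apply: eq_bigr => p' _; rewrite mulr_sumr.
apply: eq_bigr => q' _; rewrite !mxE; ring.
Qed.

Lemma ind_eq j (x : 'I_(a j)) p k (y : 'I_(b k)) q j' (x' : 'I_(a j')) (y' : 'I_(b j')) p' :
  ((tg x p, tg y q) == (Tagged (fun k => ('I_(a k) * 'I_n)%type) (x', p'),
                        Tagged (fun k => ('I_(b k) * 'I_n)%type) (y', p')))
  = (tg x p == tg x' p') && (tg y q == tg y' p').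
Proof. by []. Qed.

Lemma aux_off (aux : forall j : 'I_4, 'M[C]_(a j, b j)) j (x : 'I_(a j)) k (y : 'I_(b k)) p q :
  j != k -> auxphi aux (tg x p, tg y q) = 0.
Proof.
move=> jk; rewrite /auxphi big1 // => j' _; rewrite big1 // => x' _.
rewrite big1 // => y' _; rewrite big1 // => p' _.
rewrite ind_eq !tg_eq; case: (eqVneq j j') => [e|] /=; last by rewrite mulr0.
case: (eqVneq k j') => [e'|] /=; last by rewrite andbF mulr0.
by exfalso; move/eqP: jk; apply; rewrite e e'.
Qed.

Lemma aux_on (aux : forall j : 'I_4, 'M[C]_(a j, b j)) j (x : 'I_(a j)) (y : 'I_(b j)) p q :
  auxphi aux (tg x p, tg y q) = aux j x y / sqrtC n%:R * (p == q)%:R.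
Proof.
rewrite /auxphi (bigD1 j) //= [X in _ + X]big1 ?addr0; last first.
  move=> j' hj; apply: big1 => x' _.
  apply: big1 => y' _; apply: big1 => p' _.
  by rewrite ind_eq !tg_eq eq_sym (negPf hj) /= mulr0.
rewrite (bigD1 x) //= [X in _ + X]big1 ?addr0; last first.
  move=> x' hx; apply: big1 => y' _; apply: big1 => p' _.
  rewrite ind_eq !tg_eq eqxx /=.
  have -> : (x == x' :> nat) = false by apply/negbTE; rewrite eq_sym.
  by rewrite /= mulr0.
rewrite (bigD1 y) //= [X in _ + X]big1 ?addr0; last first.
  move=> y' hy; apply: big1 => p' _.
  rewrite ind_eq !tg_eq !eqxx /=.
  have -> : (y == y' :> nat) = false by apply/negbTE; rewrite eq_sym.
  by rewrite andbF /= mulr0.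
rewrite (bigD1 p) //= [X in _ + X]big1 ?addr0; last first.
  move=> p' hp; rewrite ind_eq !tg_eq !eqxx /= eq_sym (negPf hp) /= mulr0 //.
by rewrite ind_eq !tg_eq !eqxx /= eq_sym.
Qed.

Definition fv (v : 'rV[C]_#|{: blk a n * blk b n}|) (w : blk a n * blk b n) : C :=
  v 0 (enum_rank w).

Lemma vM_entry (v : 'rV[C]_#|{: blk a n * blk b n}|) w :
  (v *m (opmx P s a b)^T) 0 (enum_rank w) = \sum_u fv v u * opE P s w u.
Proof.
rewrite mxE (reindex enum_rank) /=; last exact: onW_bij (enum_rank_bij _).
by apply: eq_bigr => u _; rewrite !mxE !enum_rankK.
Qed.

Lemma eig_block (v : 'rV[C]_#|{: blk a n * blk b n}|) l :
  (forall i, (P i)^T = P i) ->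
  v *m (opmx P s a b)^T = l *: v ->
  forall j (x : 'I_(a j)) k (y : 'I_(b k)),
  (n%:R / (2 * n%:R - 1)) *: \sum_i (P (i + s j) *m Xf (fv v) x y *m P (i + s k))
   = l *: Xf (fv v) x y.
Proof.
move=> hsym hv j x k y; apply/matrixP => p q.
by rewrite -op_block // -vM_entry hv !mxE.
Qed.

Lemma block_eig (v : 'rV[C]_#|{: blk a n * blk b n}|) l :
  (forall i, (P i)^T = P i) ->
  (forall j (x : 'I_(a j)) k (y : 'I_(b k)),
   (n%:R / (2 * n%:R - 1)) *: \sum_i (P (i + s j) *m Xf (fv v) x y *m P (i + s k))
   = l *: Xf (fv v) x y) ->
  v *m (opmx P s a b)^T = l *: v.
Proof.
move=> hsym H; apply/rowP => r.
move: (enum_val r) (enum_valK r) => w <-.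
case: w => [[j [x p]] [k [y q]]].
change (existT _ j (x, p)) with (tg x p); change (existT _ k (y, q)) with (tg y q).
rewrite vM_entry op_block // H [LHS]mxE [in LHS]mxE [RHS]mxE //.
Qed.

End Blk.

Unset Implicit Arguments.

Theorem proposition4p2 (C : numClosedFieldType) (n : nat) (P : 'I_4 -> 'M[C]_n)
  (s : 'I_4 -> 'I_4) (a b : 'I_4 -> nat) :
  (0 < n)%N ->
  (forall i (p q : 'I_n), P i p q \is Num.real) ->
  (forall i, (P i)^T = P i) ->
  (forall i, P i *m P i = P i) ->
  \sum_(i < 4) P i = (2 - n%:R^-1)%:M ->
  ((\rank (P 0))%:Z = (n./2)%:Z - (-1) ^+ n)%R ->
  (forall i : 'I_4, i != 0 -> \rank (P i) = n./2) ->
  (forall U : 'M[C]_n, (forall i, stablemx U (P i)) ->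
     (U == 0) || row_full U) ->
  injective s ->
  \sum_(j < 4) a j = \sum_(j < 4) b j ->
  let M := (opmx P s a b)^T in
  (forall l : C, eigenvalue M l -> l <= 1) /\
      (forall v : 'rV[C]_#|{: blk a n * blk b n}|,
         (v <= eigenspace M 1)%MS <->
         exists aux : forall j : 'I_4, 'M[C]_(a j, b j),
           v = \row_r auxphi aux (enum_val r)).
Proof.
move=> n0 hreal hsym hid hsum hr0 hr irr inj _ M.
set lam : C := 2 - n%:R^-1.
set c : C := n%:R / (2 * n%:R - 1).
have hadj : forall m, adj (P m) = P m := fun m => adj_real (hreal m) (hsym m).
have hn : n%:R != 0 :> C by rewrite pnatr_eq0 -lt0n.
have h2 : 2 * n%:R - 1 != 0 :> C.
  have -> : 2 * n%:R - 1 = (n + n.-1)%:R :> C.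
    have e : ((n + n.-1).+1 = 2 * n)%N by lia.
    have E : ((n + n.-1)%:R + 1 : C) = 2 * n%:R.
      by rewrite natr1 e natrM.
    by rewrite -E addrK.
  by rewrite pnatr_eq0; lia.
have hcl : c * lam = 1 by rewrite /c /lam; field; rewrite ?hn ?h2.
have lam_gt0 : 0 < lam.
  rewrite /lam subr_gt0; apply: (le_lt_trans (y := 1)); last by rewrite ltr1n.
  by rewrite invf_le1 ?ltr0n ?ler1n.
have hsumj : forall j, \sum_i P (i + s j) = lam%:M.
  by move=> j; rewrite -hsum [RHS](reindex_inj (addIr (s j))).
have hr0' : \rank (P 0) != n./2.
  apply/eqP => e; move: hr0; rewrite e => /eqP; rewrite -subr_eq0 opprB addrCA subrr addr0.
  by rewrite expf_eq0 /= andbF.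
have blockeq : forall v l, v *m M = l *: v -> forall j (x : 'I_(a j)) k (y : 'I_(b k)),
    \sum_i (P (i + s j) *m Xf (fv v) x y *m P (i + s k)) = (l * lam) *: Xf (fv v) x y.
  move=> v l hv j x k y; have := eig_block hsym hv x y => /(congr1 (fun X => lam *: X)).
  by rewrite !scalerA (mulrC lam) hcl scale1r mulrC.
have coreb : forall v l, v *m M = l *: v -> forall j (x : 'I_(a j)) k (y : 'I_(b k)),
    \sum_i nrm (P (i + s j) *m Xf (fv v) x y - Xf (fv v) x y *m P (i + s k))
    = 2 * (lam - l * lam) * nrm (Xf (fv v) x y).
  move=> v l hv j x k y; apply: core_id => //; exact: blockeq.
split.
  move=> l /eigenvalueP [v hv nz].
  have [r hr1] : exists r, v 0 r != 0.
    apply/existsP; apply: contraR nz => /existsPn H; apply/eqP/rowP => r.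
    by rewrite mxE; apply/eqP; move: (H r); rewrite negbK.
  move: hr1; rewrite -(enum_valK r); move: (enum_val r) => w.
  case: w => [[j [x p]] [k [y q]]] hw.
  have nzX : Xf (fv v) (x : 'I_(a j)) (y : 'I_(b k)) != 0.
    apply: contra hw => /eqP hX; move: (congr1 (fun X : 'M[C]_n => X p q) hX).
    by rewrite !mxE /fv => h; apply/eqP; exact: h.
  have := coreb v l hv j x k y.
  have ge : 0 <= \sum_i nrm (P (i + s j) *m Xf (fv v) x y - Xf (fv v) x y *m P (i + s k)).
    by apply: sumr_ge0 => i _; apply: nrm_ge0.
  move=> e; move: ge; rewrite e pmulr_lge0 ?nrm_gt0 // pmulr_rge0 ?ltr0n //.
  have -> : lam - l * lam = lam * (1 - l) by ring.
  by rewrite pmulr_rge0 // subr_ge0.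
move=> v; split.
  move/sub_kermxP; rewrite mulmxBr mulmx1 => /eqP; rewrite subr_eq0 => /eqP hv.
  have hv1 : v *m M = 1 *: v by rewrite scale1r.
  have comm : forall j (x : 'I_(a j)) k (y : 'I_(b k)) i,
      P (i + s j) *m Xf (fv v) x y = Xf (fv v) x y *m P (i + s k).
    move=> j x k y i.
    have Z := coreb v 1 hv1 j x k y; rewrite mul1r subrr mulr0 mul0r in Z.
    have Zi : nrm (P (i + s j) *m Xf (fv v) x y - Xf (fv v) x y *m P (i + s k)) = 0.
      by move: Z => /psumr_eq0P; apply => // i' _; apply: nrm_ge0.
    by move/nrm_eq0/eqP: Zi; rewrite subr_eq0 => /eqP.
  pose p0 := Ordinal n0.
  exists (fun j => \matrix_(x, y) (Xf (fv v) (x : 'I_(a j)) (y : 'I_(b j)) p0 p0 * sqrtC n%:R)).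
  apply/rowP => r; rewrite mxE -[in LHS](enum_valK r); move: (enum_val r) => w.
  case: w => [[j [x p]] [k [y q]]].
  change (existT _ j (x, p)) with (tg x p); change (existT _ k (y, q)) with (tg y q).
  have fE : v 0 (enum_rank (tg x p, tg y q)) = Xf (fv v) x y p q by rewrite mxE.
  case: (eqVneq j k) => [ejk|njk].
    move: y fE; rewrite -ejk => y fE.
    have [mu hmu] : exists mu, Xf (fv v) x y = mu%:M.
      apply: (commutant n0 irr) => m; have := comm j x j y (m - s j).
      by rewrite subrK.
    have sq : sqrtC (n%:R : C) != 0 by rewrite sqrtC_eq0.
    by rewrite aux_on mxE fE hmu !mxE eqxx mulfK // mulr_natr.
  rewrite aux_off // fE.
  have := offdiag n0 irr hadj hr0' hr inj njk (comm j x k y).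
  by move/(congr1 (fun X : 'M[C]_n => X p q)); rewrite !mxE.
case=> aux ->; apply/sub_kermxP; rewrite mulmxBr mulmx1; apply/eqP; rewrite subr_eq0; apply/eqP.
rewrite -[X in _ = X]scale1r; apply: block_eig => // j x k y.
set w := \row_r _.
have fvE : forall u, fv w u = auxphi aux u by move=> u; rewrite /fv mxE enum_rankK.
case: (eqVneq j k) => [ejk|njk].
  move: y; rewrite -ejk => y.
  have XE : Xf (fv w) x y = (aux j x y / sqrtC n%:R)%:M.
    by apply/matrixP => p q; rewrite !mxE fvE aux_on mulr_natr.
  rewrite XE.
  have E : forall i, P (i + s j) *m (aux j x y / sqrtC n%:R)%:M *m P (i + s j)
         = (aux j x y / sqrtC n%:R) *: P (i + s j).
    by move=> i; rewrite mul_mx_scalar -scalemxAl hid.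
  rewrite (eq_bigr _ (fun i _ => E i)) -scaler_sumr hsumj scalerA !scale_scalar_mx.
  by rewrite mulrAC -/c hcl !mul1r.
have XE : Xf (fv w) x y = 0 by apply/matrixP => p q; rewrite !mxE fvE aux_off.
by rewrite XE big1 ?scaler0 // => i _; rewrite mulmx0 mul0mx.
Qed.
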